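(* Let $[\mathbf v,d]=[v_{11},v_{12},v_{21},v_{22},d]$ with $\mathbf v_1=(v_{11},v_{12})\neq0$, $\mathbf v_2=(v_{21},v_{22})\neq0$ and $d\neq0$. If the following three conditions all hold: (1) $v_{11}^2+v_{12}^2\neq0$ and $v_{21}^2+v_{22}^2\neq0$; (2) $v_{21}\neq0$ or $v_{11}^2-d^2\neq0$; (3) $v_{11}\neq0$ or $v_{21}^2-d^2\neq0$; then neither $L_1$ nor $L_2$ is a polynomial factor of $h$. Moreover, if any one of the conditions (1), (2), (3) fails, then $L_1$ or $L_2$ is a polynomial factor of $h$.
   Context: In variables $u,y_1,y_2$: $L_1=v_{11}(u-y_1)-v_{12}y_2$, $L_2=-v_{21}(u+y_1)-v_{22}y_2$, $f_1=(u-y_1)^2+y_2^2$, $f_2=(u+y_1)^2+y_2^2$, and $h=(L_2^2f_1+L_1^2f_2-d^2f_1f_2)^2-4L_1^2L_2^2f_1f_2$, a homogeneous polynomial of degree $8$. Parameters are complex numbers. *)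

(* Defs.v *)
From HB Require Import structures.
From mathcomp Require Import all_boot all_order all_algebra.
From mathcomp Require Import reals.
From mathcomp Require Import complex.
From mathcomp Require Import mpoly.
Set Implicit Arguments. Unset Strict Implicit. Unset Printing Implicit Defensive.
Import Order.TTheory GRing.Theory Num.Theory.
Local Open Scope ring_scope.

Section Defs.
Variable C : comRingType.
Definition pu : {mpoly C[3]} := 'X_(inord 0).
Definition py1 : {mpoly C[3]} := 'X_(inord 1).
Definition py2 : {mpoly C[3]} := 'X_(inord 2).

Definition L1 (v11 v12 : C) : {mpoly C[3]} :=
  v11%:MP * (pu - py1) - v12%:MP * py2.
Definition L2 (v21 v22 : C) : {mpoly C[3]} :=
  - (v21%:MP * (pu + py1)) - v22%:MP * py2.
Definition f1 : {mpoly C[3]} := (pu - py1) ^+ 2 + py2 ^+ 2.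
Definition f2 : {mpoly C[3]} := (pu + py1) ^+ 2 + py2 ^+ 2.
Definition hpoly (v11 v12 v21 v22 d : C) : {mpoly C[3]} :=
  let l1 := L1 v11 v12 in let l2 := L2 v21 v22 in
  (l2 ^+ 2 * f1 + l1 ^+ 2 * f2 - d%:MP ^+ 2 * f1 * f2) ^+ 2
  - 4%:R * l1 ^+ 2 * l2 ^+ 2 * f1 * f2.

Definition poly_factor (p q : {mpoly C[3]}) : Prop := exists r, q = p * r.
End Defs.

(* Main.v *)
Require Import Defs.
From HB Require Import structures.
From mathcomp Require Import all_boot all_order all_algebra.
From mathcomp Require Import reals.
From mathcomp Require Import complex.
From mathcomp Require Import mpoly.
From mathcomp Require Import ring.
Import Order.TTheory GRing.Theory Num.Theory.
Local Open Scope ring_scope.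
Local Open Scope complex_scope.

Section Generic.
Variable A : comNzRingType.

Lemma gen_sq (L P K r : A) : P = L * r -> P ^+ 2 + L ^+ 2 * K = L * (r * P + L * K).
Proof. by move=> HP; rewrite [in LHS]expr2 {1}HP; ring. Qed.

Lemma gen1 (c w F Lm G e Y : A) : c * w = 1 -> c ^+ 2 * F = Lm * G + e * Y -> e = 0 ->
  F = Lm * (w ^+ 2 * G).
Proof.
move=> cw H e0; rewrite e0 mul0r addr0 in H.
have ->: F = w ^+ 2 * (c ^+ 2 * F) by rewrite mulrA -exprMn (mulrC w) cw expr1n mul1r.
by rewrite H; ring.
Qed.

Lemma gen2 (c w L Y Q G e Z : A) : c * w = 1 -> L = - (c * Y) -> Q = Y * G + e * Z -> e = 0 ->
  Q = L * (- (w * G)).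
Proof.
move=> cw -> -> ->; rewrite mul0r addr0.
transitivity ((c * w) * (Y * G)); first by rewrite cw mul1r.
ring.
Qed.
End Generic.

Section Main.
Variable R : realType.
Local Notation C := (R[i]).
Variables v11 v12 v21 v22 d : C.

Definition pt (u y1 y2 : C) : 'I_3 -> C :=
  fun i => if val i == 0%N then u else if val i == 1%N then y1 else y2.

Lemma pt0 u y1 y2 : pt u y1 y2 (inord 0) = u.
Proof. by rewrite /pt /= inordK. Qed.
Lemma pt1 u y1 y2 : pt u y1 y2 (inord 1) = y1.
Proof. by rewrite /pt /= inordK. Qed.
Lemma pt2 u y1 y2 : pt u y1 y2 (inord 2) = y2.
Proof. by rewrite /pt /= inordK. Qed.

Definition hC (a s b : C) : C :=
  let l1 := v11 * a - v12 * b in let l2 := - (v21 * s) - v22 * b in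
  let g1 := a ^+ 2 + b ^+ 2 in let g2 := s ^+ 2 + b ^+ 2 in
  (l2 ^+ 2 * g1 + l1 ^+ 2 * g2 - d ^+ 2 * g1 * g2) ^+ 2
  - 4%:R * l1 ^+ 2 * l2 ^+ 2 * g1 * g2.

Lemma evalh u y1 y2 : (hpoly v11 v12 v21 v22 d).@[pt u y1 y2] = hC (u - y1) (u + y1) y2.
Proof.
rewrite /hpoly /L1 /L2 /f1 /f2 /pu /py1 /py2 !expr2
  !(mevalB, mevalD, mevalN, mevalM, mevalC, mevalXU, mevalMn, meval1) pt0 pt1 pt2.
rewrite /hC /=; ring.
Qed.

Lemma evalL1 u y1 y2 : (L1 v11 v12).@[pt u y1 y2] = v11 * (u - y1) - v12 * y2.
Proof. by rewrite /L1 /pu /py1 /py2 !(mevalB, mevalD, mevalN, mevalM, mevalC, mevalXU) pt0 pt1 pt2. Qed.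

Lemma evalL2 u y1 y2 : (L2 v21 v22).@[pt u y1 y2] = - (v21 * (u + y1)) - v22 * y2.
Proof. by rewrite /L2 /pu /py1 /py2 !(mevalB, mevalD, mevalN, mevalM, mevalC, mevalXU) pt0 pt1 pt2. Qed.

Lemma nd (L q : {mpoly C[3]}) x : poly_factor L q -> L.@[x] = 0 -> q.@[x] = 0.
Proof. by case=> r ->; rewrite mevalM => ->; rewrite mul0r. Qed.

Lemma two_neq0 : (2%:R : C) != 0.
Proof. by rewrite pnatr_eq0. Qed.

Lemma half_diff (a s : C) : (a + s) / 2%:R - (s - a) / 2%:R = a.
Proof. by field. Qed.
Lemma half_sum (a s : C) : (a + s) / 2%:R + (s - a) / 2%:R = s.
Proof. by field. Qed.

Lemma hL1zero a s b : v11 * a - v12 * b = 0 ->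
  hC a s b = ((a ^+ 2 + b ^+ 2) * ((- (v21 * s) - v22 * b) ^+ 2 - d ^+ 2 * (s ^+ 2 + b ^+ 2))) ^+ 2.
Proof. by move=> H; rewrite /hC /= H; ring. Qed.

Lemma hL2zero a s b : - (v21 * s) - v22 * b = 0 ->
  hC a s b = ((s ^+ 2 + b ^+ 2) * ((v11 * a - v12 * b) ^+ 2 - d ^+ 2 * (a ^+ 2 + b ^+ 2))) ^+ 2.
Proof. by move=> H; rewrite /hC /= H; ring. Qed.


Definition Qf (p q s : C) := (p * s - q) ^+ 2 - d ^+ 2 * (s ^+ 2 + 1).

Lemma core p q : d != 0 -> Qf p q 0 = 0 -> Qf p q 1 = 0 -> Qf p q (-1) = 0 -> False.
Proof.
move=> dn H0 H1 H2.
have E : d ^+ 4 = ((Qf p q 1 - Qf p q (-1)) / 2%:R) ^+ 2 / 4%:R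
   - ((Qf p q 1 + Qf p q (-1)) / 2%:R - Qf p q 0) * q ^+ 2 - Qf p q 0 * p ^+ 2
   + ((Qf p q 1 + Qf p q (-1)) / 2%:R - Qf p q 0) * Qf p q 0.
  by rewrite /Qf; field.
move: E; rewrite H0 H1 H2 => /eqP.
have -> : ((0 - 0) / 2%:R) ^+ 2 / 4%:R - ((0 + 0) / 2%:R - 0) * q ^+ 2 - 0 * p ^+ 2 +
    ((0 + 0) / 2%:R - 0) * 0 = 0 :> C by ring.
by rewrite expf_eq0 /= (negbTE dn).
Qed.

Lemma nd1 : d != 0 -> v11 ^+ 2 + v12 ^+ 2 != 0 -> (v11 != 0) || (v21 ^+ 2 - d ^+ 2 != 0) ->
  ~ poly_factor (L1 v11 v12) (hpoly v11 v12 v21 v22 d).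
Proof.
move=> dn c1 c3 Hf.
have key a s b : v11 * a - v12 * b = 0 -> hC a s b = 0.
  move=> H; have := @nd _ _ (pt ((a + s) / 2%:R) ((s - a) / 2%:R) b) Hf.
  by rewrite evalL1 evalh half_diff half_sum; apply.
case: (eqVneq v11 0) => [v0|v0].
  rewrite v0 eqxx /= in c3.
  have H0 : v11 * 1 - v12 * 0 = 0 by rewrite v0; ring.
  have E : hC 1 1 0 = (v21 ^+ 2 - d ^+ 2) ^+ 2 by rewrite hL1zero //; ring.
  by move: (key _ 1 _ H0); rewrite E => /eqP; rewrite expf_eq0 /= (negbTE c3).
pose a := v12 / v11.
have H0 : v11 * a - v12 * 1 = 0 by rewrite /a mulrC divfK // mulr1 subrr.
have g1n : a ^+ 2 + 1 ^+ 2 != 0.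
  apply: contra c1 => /eqP g0; apply/eqP.
  have -> : v11 ^+ 2 + v12 ^+ 2 = v11 ^+ 2 * (a ^+ 2 + 1 ^+ 2) by rewrite /a; field.
  by rewrite g0 mulr0.
have HQ s : Qf v21 (- v22) s = 0.
  move: (key _ s _ H0); rewrite hL1zero // => /eqP.
  rewrite expf_eq0 /= mulf_eq0 (negbTE g1n) /= => /eqP HH.
  by rewrite -HH /Qf; ring.
exact: (core _ _ dn (HQ 0) (HQ 1) (HQ (-1))).
Qed.

Lemma nd2 : d != 0 -> v21 ^+ 2 + v22 ^+ 2 != 0 -> (v21 != 0) || (v11 ^+ 2 - d ^+ 2 != 0) ->
  ~ poly_factor (L2 v21 v22) (hpoly v11 v12 v21 v22 d).
Proof.
move=> dn c1 c3 Hf.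
have key a s b : - (v21 * s) - v22 * b = 0 -> hC a s b = 0.
  move=> H; have := @nd _ _ (pt ((a + s) / 2%:R) ((s - a) / 2%:R) b) Hf.
  by rewrite evalL2 evalh half_diff half_sum; apply.
case: (eqVneq v21 0) => [v0|v0].
  rewrite v0 eqxx /= in c3.
  have H0 : - (v21 * 1) - v22 * 0 = 0 by rewrite v0; ring.
  have E : hC 1 1 0 = (v11 ^+ 2 - d ^+ 2) ^+ 2 by rewrite hL2zero //; ring.
  by move: (key 1 _ _ H0); rewrite E => /eqP; rewrite expf_eq0 /= (negbTE c3).
pose s := - (v22 / v21).
have H0 : - (v21 * s) - v22 * 1 = 0 by rewrite /s mulrN opprK mulrC divfK // mulr1 subrr.
have g1n : s ^+ 2 + 1 ^+ 2 != 0.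
  apply: contra c1 => /eqP g0; apply/eqP.
  have -> : v21 ^+ 2 + v22 ^+ 2 = v21 ^+ 2 * (s ^+ 2 + 1 ^+ 2) by rewrite /s; field.
  by rewrite g0 mulr0.
have HQ a : Qf v11 v12 a = 0.
  move: (key a _ _ H0); rewrite hL2zero // => /eqP.
  rewrite expf_eq0 /= mulf_eq0 (negbTE g1n) /= => /eqP HH.
  by rewrite -HH /Qf; ring.
exact: (core _ _ dn (HQ 0) (HQ 1) (HQ (-1))).
Qed.


Local Notation MP := (fun c : C => (c%:MP : {mpoly C[3]})).

Lemma div1 : (v11, v12) != (0, 0) ->
  (v11 ^+ 2 + v12 ^+ 2 == 0) || ((v11 == 0) && (v21 ^+ 2 - d ^+ 2 == 0)) ->
  poly_factor (L1 v11 v12) (hpoly v11 v12 v21 v22 d).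
Proof.
move=> nz H.
suff [r Hr] : poly_factor (L1 v11 v12) (@f1 C * (L2 v21 v22 ^+ 2 - (MP d) ^+ 2 * @f2 C)).
  exists (r * (@f1 C * (L2 v21 v22 ^+ 2 - (MP d) ^+ 2 * @f2 C)) + L1 v11 v12 *
    (2%:R * @f1 C * (L2 v21 v22 ^+ 2 - (MP d) ^+ 2 * @f2 C) * @f2 C + L1 v11 v12 ^+ 2 * @f2 C ^+ 2
     - 4%:R * L2 v21 v22 ^+ 2 * @f1 C * @f2 C)).
  rewrite -(gen_sq _ _ _ _ _ Hr) /hpoly /=; ring.
case/orP: H => [/eqP H|/andP[/eqP v0 /eqP H]].
  have v0 : v11 != 0.
    apply/negP => /eqP v0; move: H; rewrite v0 expr0n /= add0r => /eqP.
    by rewrite sqrf_eq0 => /eqP v12z; move: nz; rewrite v0 v12z eqxx.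
  have cw : MP v11 * MP v11^-1 = 1 by rewrite /= -rmorphM mulfV // rmorph1.
  have Hid : MP v11 ^+ 2 * @f1 C = L1 v11 v12 * (MP v11 * ((pu C) - (py1 C)) + MP v12 * (py2 C))
     + (MP v11 ^+ 2 + MP v12 ^+ 2) * (py2 C) ^+ 2 by rewrite /f1 /L1 /=; ring.
  have e0 : MP v11 ^+ 2 + MP v12 ^+ 2 = 0 by rewrite /= -!rmorphXn -rmorphD H rmorph0.
  have Ef := gen1 _ _ _ _ _ _ _ _ cw Hid e0.
  eexists; rewrite Ef -mulrA; reflexivity.
have v12n : v12 != 0 by apply/negP => /eqP z; move: nz; rewrite v0 z eqxx.
have cw : MP v12 * MP v12^-1 = 1 by rewrite /= -rmorphM mulfV // rmorph1.
have EL : L1 v11 v12 = - (MP v12 * (py2 C)) by rewrite /L1 v0 rmorph0 mul0r sub0r.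
have Hid : L2 v21 v22 ^+ 2 - (MP d) ^+ 2 * @f2 C =
   (py2 C) * (2%:R * MP v21 * MP v22 * ((pu C) + (py1 C)) + (MP v22 ^+ 2 - MP d ^+ 2) * (py2 C))
   + (MP v21 ^+ 2 - MP d ^+ 2) * ((pu C) + (py1 C)) ^+ 2 by rewrite /L2 /f2 /=; ring.
have e0 : MP v21 ^+ 2 - MP d ^+ 2 = 0 by rewrite /= -!rmorphXn -rmorphB H rmorph0.
have EQ := gen2 _ _ _ _ _ _ _ _ _ cw EL Hid e0.
eexists; rewrite EQ mulrCA; reflexivity.
Qed.


Lemma div2 : (v21, v22) != (0, 0) ->
  (v21 ^+ 2 + v22 ^+ 2 == 0) || ((v21 == 0) && (v11 ^+ 2 - d ^+ 2 == 0)) ->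
  poly_factor (L2 v21 v22) (hpoly v11 v12 v21 v22 d).
Proof.
move=> nz H.
suff [r Hr] : poly_factor (L2 v21 v22) (@f2 C * (L1 v11 v12 ^+ 2 - (MP d) ^+ 2 * @f1 C)).
  exists (r * (@f2 C * (L1 v11 v12 ^+ 2 - (MP d) ^+ 2 * @f1 C)) + L2 v21 v22 *
    (2%:R * @f2 C * (L1 v11 v12 ^+ 2 - (MP d) ^+ 2 * @f1 C) * @f1 C + L2 v21 v22 ^+ 2 * @f1 C ^+ 2
     - 4%:R * L1 v11 v12 ^+ 2 * @f1 C * @f2 C)).
  rewrite -(gen_sq _ _ _ _ _ Hr) /hpoly /=; ring.
case/orP: H => [/eqP H|/andP[/eqP v0 /eqP H]].
  have v0 : v21 != 0.
    apply/negP => /eqP v0; move: H; rewrite v0 expr0n /= add0r => /eqP.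
    by rewrite sqrf_eq0 => /eqP v22z; move: nz; rewrite v0 v22z eqxx.
  have cw : MP v21 * MP v21^-1 = 1 by rewrite /= -rmorphM mulfV // rmorph1.
  have Hid : MP v21 ^+ 2 * @f2 C = L2 v21 v22 * (- (MP v21 * ((pu C) + (py1 C))) + MP v22 * (py2 C))
     + (MP v21 ^+ 2 + MP v22 ^+ 2) * (py2 C) ^+ 2 by rewrite /f2 /L2 /=; ring.
  have e0 : MP v21 ^+ 2 + MP v22 ^+ 2 = 0 by rewrite /= -!rmorphXn -rmorphD H rmorph0.
  have Ef := gen1 _ _ _ _ _ _ _ _ cw Hid e0.
  eexists; rewrite Ef -mulrA; reflexivity.
have v22n : v22 != 0 by apply/negP => /eqP z; move: nz; rewrite v0 z eqxx.
have cw : MP v22 * MP v22^-1 = 1 by rewrite /= -rmorphM mulfV // rmorph1.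
have EL : L2 v21 v22 = - (MP v22 * (py2 C)) by rewrite /L2 v0 rmorph0 mul0r oppr0 sub0r.
have Hid : L1 v11 v12 ^+ 2 - (MP d) ^+ 2 * @f1 C =
   (py2 C) * (- (2%:R * MP v11 * MP v12 * ((pu C) - (py1 C))) + (MP v12 ^+ 2 - MP d ^+ 2) * (py2 C))
   + (MP v11 ^+ 2 - MP d ^+ 2) * ((pu C) - (py1 C)) ^+ 2 by rewrite /L1 /f1 /=; ring.
have e0 : MP v11 ^+ 2 - MP d ^+ 2 = 0 by rewrite /= -!rmorphXn -rmorphB H rmorph0.
have EQ := gen2 _ _ _ _ _ _ _ _ _ cw EL Hid e0.
eexists; rewrite EQ mulrCA; reflexivity.
Qed.

End Main.

Theorem lemma8p3 (R : realType) (v11 v12 v21 v22 d : R[i]) :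
  (v11, v12) != (0, 0) -> (v21, v22) != (0, 0) -> d != 0 ->
  let cond1 := (v11 ^+ 2 + v12 ^+ 2 != 0) && (v21 ^+ 2 + v22 ^+ 2 != 0) in
  let cond2 := (v21 != 0) || (v11 ^+ 2 - d ^+ 2 != 0) in
  let cond3 := (v11 != 0) || (v21 ^+ 2 - d ^+ 2 != 0) in
  ([&& cond1, cond2 & cond3] ->
     ~ poly_factor (L1 v11 v12) (hpoly v11 v12 v21 v22 d) /\
     ~ poly_factor (L2 v21 v22) (hpoly v11 v12 v21 v22 d)) /\
  (~~ [&& cond1, cond2 & cond3] ->
     poly_factor (L1 v11 v12) (hpoly v11 v12 v21 v22 d) \/
     poly_factor (L2 v21 v22) (hpoly v11 v12 v21 v22 d)).
Proof.
intros n1 n2 dn; cbv zeta; split.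
  case/and3P => /andP[c1a c1b] c2 c3; split.
    exact: nd1.
  exact: nd2.
move=> H.
case/boolP: (v11 ^+ 2 + v12 ^+ 2 == 0) => a1.
  by left; apply: div1 => //; rewrite a1.
case/boolP: (v21 ^+ 2 + v22 ^+ 2 == 0) => a2.
  by right; apply: div2 => //; rewrite a2.
case/boolP: ((v11 == 0) && (v21 ^+ 2 - d ^+ 2 == 0)) => a3.
  by left; apply: div1 => //; rewrite a3 orbT.
case/boolP: ((v21 == 0) && (v11 ^+ 2 - d ^+ 2 == 0)) => a4.
  by right; apply: div2 => //; rewrite a4 orbT.
by move: H; rewrite a1 a2 -!negb_and a3 a4.
Qed.
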